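(* Every countable ring $R$ admits a proper norm. More precisely, let $w\colon R\to\mathbb N$ be a finite-to-one function with $w(0)=0$, $w(r)\ge2$ for $r\ne0$, and $w(r)=w(-r)$; extend $w$ to all terms $t$ in the language $\{+,\cdot\}\cup R$ (constants from $R$) by $w(t_1+t_2)=w(t_1)+w(t_2)$ and $w(t_1\cdot t_2)=w(t_1)w(t_2)$, and let $|r|$ be the minimum of $w(t)$ over all terms $t$ whose value in $R$ is $r$. Then $|\cdot|$ is a proper norm on $R$.
   Context: All rings are unital. A norm on a ring $R$ is a function $|\cdot|\colon R\to[0,\infty)$ such that $(a,b)\mapsto|a-b|$ is a metric on $R$ and $|rs|\le|r||s|$ for all $r,s\in R$; it is proper if every closed ball of this metric is compact. *)

(* Defs.v *)
From HB Require Import structures.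
From mathcomp Require Import all_boot all_order all_algebra.
From mathcomp Require Import boolp Rstruct.
Set Implicit Arguments. Unset Strict Implicit. Unset Printing Implicit Defensive.
Import Order.TTheory GRing.Theory Num.Theory.
Local Open Scope ring_scope.

Notation Real := Rdefinitions.R.

Inductive term (R : Type) : Type :=
| TConst : R -> term R
| TAdd : term R -> term R -> term R
| TMul : term R -> term R -> term R.

Fixpoint teval (R : pzRingType) (t : term R) : R :=
  match t with
  | TConst r => r
  | TAdd t1 t2 => teval t1 + teval t2
  | TMul t1 t2 => teval t1 * teval t2
  end.

Fixpoint tweight (R : Type) (w : R -> nat) (t : term R) : nat :=
  match t with
  | TConst r => w r
  | TAdd t1 t2 => tweight w t1 + tweight w t2
  | TMul t1 t2 => tweight w t1 * tweight w t2
  end%N.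

Lemma term_norm_ex (R : pzRingType) (w : R -> nat) (r : R) :
  exists n, `[< exists t : term R, teval t = r /\ tweight w t = n >].
Proof. exists (w r); apply/asboolP; by exists (TConst r). Qed.

Definition term_norm (R : pzRingType) (w : R -> nat) (r : R) : nat :=
  ex_minn (term_norm_ex w r).

Definition countable_type (T : Type) : Prop :=
  exists f : T -> nat, forall x y, f x = f y -> x = y.

Definition finite_to_one (T : Type) (w : T -> nat) : Prop :=
  forall n : nat, exists s : list T, forall x, w x = n -> List.In x s.

Definition is_metric (T : Type) (d : T -> T -> Real) : Prop :=
  [/\ forall x y, 0 <= d x y,
      forall x y, d x y = 0 <-> x = y,
      forall x y, d x y = d y x
    & forall x y z, d x z <= d x y + d y z].

Definition metric_open (T : Type) (d : T -> T -> Real) (U : T -> Prop) : Prop :=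
  forall x, U x -> exists2 e : Real, 0 < e & forall y, d x y < e -> U y.

Definition metric_compact (T : Type) (d : T -> T -> Real) (K : T -> Prop) : Prop :=
  forall (I : Type) (U : I -> T -> Prop),
    (forall i, metric_open d (U i)) ->
    (forall x, K x -> exists i, U i x) ->
    exists s : list I, forall x, K x -> exists i, List.In i s /\ U i x.

Definition is_ring_norm (R : pzRingType) (N : R -> Real) : Prop :=
  [/\ forall r, 0 <= N r,
      is_metric (fun a b => N (a - b))
    & forall r s, N (r * s) <= N r * N s].

Definition is_proper_ring_norm (R : pzRingType) (N : R -> Real) : Prop :=
  is_ring_norm N /\
  forall (a : R) (e : Real),
    metric_compact (fun x y => N (x - y)) (fun b => N (a - b) <= e).

(* Main.v *)
Require Import Defs.
From Stdlib Require Import List Classical Lia.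
From HB Require Import structures.
From mathcomp Require Import all_boot all_order all_algebra.
From mathcomp Require Import boolp Rstruct zify.
Import Order.TTheory GRing.Theory Num.Theory.
Local Open Scope ring_scope.

Section Aux.
Variable R : pzRingType.
Variable w : R -> nat.

Lemma tn_spec (r : R) : exists t : term R, teval t = r /\ tweight w t = term_norm w r.
Proof.
rewrite /term_norm; case: ex_minnP => m /asboolP [t [H1 H2]] _; by exists t.
Qed.

Lemma tn_min (t : term R) : (term_norm w (teval t) <= tweight w t)%N.
Proof.
rewrite /term_norm; case: ex_minnP => m _ Hm; apply: Hm; apply/asboolP; by exists t.
Qed.

Hypothesis w0 : w 0 = 0%N.
Hypothesis w2 : forall r : R, r != 0 -> (2 <= w r)%N.
Hypothesis wN : forall r : R, w r = w (- r).

Lemma tw0 (t : term R) : tweight w t = 0%N -> teval t = 0.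
Proof.
elim: t => [r|a IHa b IHb|a IHa b IHb] /=.
- move=> H; case: (eqVneq r 0) => // /w2; by rewrite H.
- move/eqP; rewrite addn_eq0 => /andP [/eqP /IHa -> /eqP /IHb ->]; by rewrite addr0.
- move/eqP; rewrite muln_eq0 => /orP [/eqP /IHa ->|/eqP /IHb ->]; by rewrite ?mul0r ?mulr0.
Qed.

Lemma tw1 (t : term R) : tweight w t <> 1%N.
Proof.
elim: t => [r|a IHa b IHb|a IHa b IHb] /=.
- move=> H; case: (eqVneq r 0) => [E|/w2]; first by move: H; rewrite E w0.
  by rewrite H.
- move: IHa IHb; case: (tweight w a) => [|[|p]]; case: (tweight w b) => [|[|q]] //;
  move=> *; lia.
- move: IHa IHb; case: (tweight w a) => [|[|p]]; case: (tweight w b) => [|[|q]] //;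
  move=> *; nia.
Qed.

Fixpoint tneg (t : term R) : term R :=
  match t with
  | TConst r => TConst (- r)
  | TAdd a b => TAdd (tneg a) (tneg b)
  | TMul a b => TMul (tneg a) b
  end.

Lemma tneg_eval t : teval (tneg t) = - teval t.
Proof.
elim: t => [r|a IHa b IHb|a IHa b IHb] //=; by rewrite ?IHa ?IHb ?opprD ?mulNr.
Qed.

Lemma tneg_weight t : tweight w (tneg t) = tweight w t.
Proof.
elim: t => [r|a IHa b IHb|a IHa b IHb] //=; by rewrite ?IHa ?IHb -?wN.
Qed.

Lemma tnN (r : R) : term_norm w (- r) = term_norm w r.
Proof.
have H : forall x : R, (term_norm w (- x) <= term_norm w x)%N.
  move=> x; have [t [E W]] := tn_spec x.
  by rewrite -W -tneg_weight -E -tneg_eval tn_min.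
apply/eqP; rewrite eqn_leq H /=; by rewrite -{1}(opprK r) H.
Qed.

Lemma fin_weights (Hf : finite_to_one w) (n : nat) :
  exists s : list R, forall t, (tweight w t <= n)%N -> In (teval t) s.
Proof.
elim: n => [|n [s Hs]].
  exists (0 :: nil) => t; rewrite leqn0 => /eqP /tw0 ->; by left.
have [c Hc] := Hf n.+1.
exists (s ++ c ++ flat_map (fun a => List.map (fun b => a + b) s) s
          ++ flat_map (fun a => List.map (fun b => a * b) s) s).
have Hs' : forall x, In x s -> In x (s ++ c ++ flat_map (fun a => List.map (fun b => a + b) s) s
          ++ flat_map (fun a => List.map (fun b => a * b) s) s).
  by move=> x Hx; apply: in_or_app; left.
have s0 : In 0 s by apply: (Hs (TConst 0)); rewrite /= w0.
elim => [r|a IHa b IHb|a IHa b IHb] /= Hw.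
- case: (leqP (w r) n) => Hr; first by apply: Hs' (Hs (TConst r) Hr).
  apply: in_or_app; right; apply: in_or_app; left; apply: Hc; apply/eqP.
  by rewrite eqn_leq Hw Hr.
- case Ea: (tweight w a) Hw => [|p] Hw.
    by rewrite (tw0 _ Ea) add0r; apply: IHb.
  case Eb: (tweight w b) Hw => [|q] Hw.
    by rewrite (tw0 _ Eb) addr0; apply: IHa; rewrite Ea; lia.
  apply: in_or_app; right; apply: in_or_app; right; apply: in_or_app; left.
  apply/in_flat_map; exists (teval a); split; first by apply: Hs; rewrite Ea; lia.
  apply: List.in_map; apply: Hs; rewrite Eb; lia.
- case Ea: (tweight w a) Hw => [|p] Hw.
    by rewrite (tw0 _ Ea) mul0r; apply: Hs'.
  case Eb: (tweight w b) Hw => [|q] Hw.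
    by rewrite (tw0 _ Eb) mulr0; apply: Hs'.
  have := tw1 a; have := tw1 b; rewrite Ea Eb => H1 H2.
  apply: in_or_app; right; apply: in_or_app; right; apply: in_or_app; right.
  apply/in_flat_map; exists (teval a); split; first by apply: Hs; rewrite Ea; nia.
  apply: List.in_map; apply: Hs; rewrite Eb; nia.
Qed.

End Aux.
Arguments tn_spec {R}. Arguments tn_min {R}. Arguments tw0 {R w}. Arguments tnN {R w}. Arguments fin_weights {R w}.

Lemma fin_cover (T I : Type) (K : T -> Prop) (U : I -> T -> Prop)
  (Hc : forall x, K x -> exists i, U i x) (s : list T) :
  exists l : list I, forall x, K x -> In x s -> exists i, In i l /\ U i x.
Proof.
elim: s => [|v s [l Hl]]; first by exists nil.
case: (Classical_Prop.classic (K v)) => Kv.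
  have [i Hi] := Hc v Kv.
  exists (i :: l) => x Kx [<-|Hx]; first by exists i; split => //; left.
  have [j [Hj1 Hj2]] := Hl x Kx Hx; exists j; split => //; by right.
exists l => x Kx [E|Hx]; first by subst.
by apply: Hl.
Qed.

Theorem mainTheorem11 (R : pzRingType) (w : R -> nat) :
  countable_type R ->
  finite_to_one w ->
  w 0 = 0%N ->
  (forall r : R, r != 0 -> (2 <= w r)%N) ->
  (forall r : R, w r = w (- r)) ->
  is_proper_ring_norm (fun r : R => ((term_norm w r)%:R : Real)).
Proof.
move=> _ Hf w0 w2 wN.
have tadd : forall x y : R, (term_norm w (x + y) <= term_norm w x + term_norm w y)%N.
  move=> x y; have [t1 [E1 W1]] := tn_spec w x; have [t2 [E2 W2]] := tn_spec w y.
  have := tn_min w (TAdd t1 t2); by rewrite /= E1 E2 W1 W2.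
have tmul : forall x y : R, (term_norm w (x * y) <= term_norm w x * term_norm w y)%N.
  move=> x y; have [t1 [E1 W1]] := tn_spec w x; have [t2 [E2 W2]] := tn_spec w y.
  have := tn_min w (TMul t1 t2); by rewrite /= E1 E2 W1 W2.
split; first split.
- by move=> r; rewrite ler0n.
- split.
  + by move=> x y; rewrite ler0n.
  + move=> x y; split => [H|->].
      have : term_norm w (x - y) = 0%N by apply/eqP; rewrite -(eqr_nat Real) H.
      have [t [E W]] := tn_spec w (x - y); rewrite -W => /(tw0 w2).
      by rewrite E => /eqP; rewrite subr_eq0 => /eqP.
    rewrite subrr; have := tn_min w (TConst 0); rewrite /= w0 leqn0 => /eqP -> //.
  + by move=> x y; rewrite -opprB tnN.
  + move=> x y z; rewrite -natrD ler_nat.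
    have -> : x - z = (x - y) + (y - z) by rewrite addrA subrK.
    exact: tadd.
- by move=> r s; rewrite -natrM ler_nat.
move=> a e I U _ Hc.
set m := Num.bound `|e|.
have Hm : `|e| < m%:R by apply: archi_boundP.
have [s Hs] := fin_weights w0 w2 Hf m.
have [l Hl] := fin_cover _ _ _ _ Hc (List.map (fun v => a - v) s).
exists l => x Kx; apply: Hl => //.
have [t [E W]] := tn_spec w (a - x).
have -> : x = a - teval t by rewrite E opprB addrC subrK.
apply: List.in_map; apply: Hs; rewrite W.
apply: ltnW; rewrite -(ltr_nat Real); apply: (le_lt_trans Kx).
apply: le_lt_trans Hm; exact: ler_norm.
Qed.
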